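(* Let $X$ be a topological space and let $\mathrm{Fer}(X)$ denote the set of closed subsets of $X$. For $W\in\mathrm{Fer}(X)$ put $\mathfrak{Z}(W)=\{Z\in\mathrm{Fer}(X)\mid Z\supseteq W\}$. For $W_1,W_2\in\mathrm{Fer}(X)$ with $W_1\subseteq W_2$, define $\delta^{W_2}_{W_1}:\mathfrak{Z}(W_1)\to\mathfrak{Z}(W_2)$ by $\delta^{W_2}_{W_1}(Z)=Z\cup W_2$. Then $\mathfrak{Z}$, together with the maps $\delta^{W_2}_{W_1}$, is a conciliation in $X$.
   Context: A pre-conciliation $G$ in a topological space $X$ consists of a set $G(W)$ for each closed set $W\in\mathrm{Fer}(X)$, and for all closed $W_1\subseteq W_2$ a map (called a mediation) $\delta^{W_2}_{W_1}:G(W_1)\to G(W_2)$, such that $\delta^W_W$ is the identity map of $G(W)$ for every closed $W$, and $\delta^{W_3}_{W_2}\circ\delta^{W_2}_{W_1}=\delta^{W_3}_{W_1}$ whenever $W_1\subseteq W_2\subseteq W_3$ are closed. A family $(W_i)_{i\in I}$ is a finite closed co-covering of $W\in\mathrm{Fer}(X)$ if $I$ is finite, each $W_i$ is closed, and $W=\bigcap_{i\in I}W_i$. A pre-conciliation $G$ is unified if for every nonempty closed $W$, every finite closed co-covering $(W_i)_{i\in I}$ of $W$, and all $t,s\in G(W)$: if $\delta^{W_j}_W(t)=\delta^{W_j}_W(s)$ for all $j\in I$, then $t=s$. A unified pre-conciliation $G$ is a conciliation if for every nonempty closed $W$, every finite closed co-covering $(W_i)_{i\in I}$ of $W$, and every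 family $(t_i)_{i\in I}$ with $t_i\in G(W_i)$ satisfying $\delta^{W_i\cup W_j}_{W_i}(t_i)=\delta^{W_i\cup W_j}_{W_j}(t_j)$ for all $i,j\in I$, there exists a unique $t\in G(W)$ with $\delta^{W_i}_W(t)=t_i$ for all $i\in I$. *)

(* Defs.v *)
From mathcomp Require Import all_boot all_order.
From mathcomp Require Import all_classical all_reals all_analysis.
Unset Printing Implicit Defensive.
Local Open Scope classical_set_scope.

Definition Fer (X : topologicalType) := {W : set X | closed W}.

Definition ferU (X : topologicalType) (A B : Fer X) : Fer X :=
  exist _ (sval A `|` sval B) (@closedU X _ _ (proj2_sig A) (proj2_sig B)).

Section Conc.
Variable X : topologicalType.
(* G W = G(W); delta W1 W2 = the mediation delta^{W2}_{W1} : G(W1) -> G(W2).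
   delta is given as a total function; only its values for W1 ⊆ W2 matter. *)
Variables (G : Fer X -> Type) (delta : forall W1 W2 : Fer X, G W1 -> G W2).

Definition is_preconciliation : Prop :=
  (forall (W : Fer X) (t : G W), delta W W t = t) /\
  (forall W1 W2 W3 : Fer X, sval W1 `<=` sval W2 -> sval W2 `<=` sval W3 ->
     forall t : G W1, delta W2 W3 (delta W1 W2 t) = delta W1 W3 t).

Definition co_covering (W : Fer X) (I : finType) (Wi : I -> Fer X) : Prop :=
  sval W = \bigcap_i sval (Wi i).

Definition is_unified : Prop :=
  is_preconciliation /\
  forall (W : Fer X), sval W !=set0 ->
  forall (I : finType) (Wi : I -> Fer X), co_covering W I Wi ->
  forall t s : G W, (forall j, delta W (Wi j) t = delta W (Wi j) s) -> t = s.

Definition is_conciliation : Prop :=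
  is_unified /\
  forall (W : Fer X), sval W !=set0 ->
  forall (I : finType) (Wi : I -> Fer X), co_covering W I Wi ->
  forall ti : forall i, G (Wi i),
    (forall i j, delta (Wi i) (ferU X (Wi i) (Wi j)) (ti i) =
                 delta (Wi j) (ferU X (Wi i) (Wi j)) (ti j)) ->
    exists! t : G W, forall i, delta W (Wi i) t = ti i.
End Conc.

Definition ZG (X : topologicalType) (W : Fer X) : Type :=
  {Z : Fer X | sval W `<=` sval Z}.

Definition Zdelta (X : topologicalType) (W1 W2 : Fer X) (Z : ZG X W1) : ZG X W2 :=
  exist _ (ferU X (sval Z) W2) (@subsetUr _ (sval (sval Z)) (sval W2)).

(* Main.v *)
Require Import Defs.
From mathcomp Require Import all_boot all_order.
From mathcomp Require Import all_classical all_reals all_analysis.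
Local Open Scope classical_set_scope.

Lemma ZG_eq (X : topologicalType) (W : Fer X) (z1 z2 : ZG X W) :
  sval (sval z1) = sval (sval z2) -> z1 = z2.
Proof.
case: z1 => [[a ha] pa]; case: z2 => [[b hb] pb] /= eab; subst b.
have -> : ha = hb by apply: Prop_irrelevance.
have -> : pa = pb by apply: Prop_irrelevance.
by [].
Qed.

Lemma setU_bigcap_distr (T : Type) (I : finType) (A : set T) (F : I -> set T) :
  A `|` \bigcap_i F i = \bigcap_i (A `|` F i).
Proof.
apply/seteqP; split => x /=.
  by case=> [Ax|Fx] i _; [left|right; exact: Fx].
move=> H; case: (pselect (A x)) => [Ax|nAx]; first by left.
right => i _; by case: (H i Logic.I).
Qed.

Theorem mainTheorem1 (X : topologicalType) :
  is_conciliation X (@ZG X) (@Zdelta X).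
Proof.
have unif : is_unified X (@ZG X) (@Zdelta X).
  split; first split.
  - move=> W t; apply: ZG_eq => /=.
    case: t => [[z hz] pz] /=; exact/setUidPl.
  - move=> W1 W2 W3 s12 s23 t; apply: ZG_eq => /=.
    by rewrite -setUA (proj2 (setUidPr _ _) s23).
  - move=> W _ I Wi cov t s H.
    apply: ZG_eq.
    have key : forall u : ZG X W, sval (sval u) = \bigcap_i (sval (sval u) `|` sval (Wi i)).
      move=> u; rewrite -setU_bigcap_distr -cov.
      by case: u => [[z hz] pz] /=; rewrite (proj2 (setUidPl _ _) pz).
    rewrite (key t) (key s); apply: eq_bigcapr => i _.
    by have := congr1 (fun u => sval (sval u)) (H i).
split => // W W0 I Wi cov ti Hc.
have Hc' : forall i j, sval (sval (ti i)) `|` sval (Wi j) =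
                       sval (sval (ti j)) `|` sval (Wi i).
  move=> i j; have := congr1 (fun u => sval (sval u)) (Hc i j) => /= e.
  have ei : sval (sval (ti i)) `|` sval (Wi i) = sval (sval (ti i)).
    by case: (ti i) => [[z hz] pz] /=; exact/setUidPl.
  have ej : sval (sval (ti j)) `|` sval (Wi j) = sval (sval (ti j)).
    by case: (ti j) => [[z hz] pz] /=; exact/setUidPl.
  move: e; rewrite setUA ei [sval (Wi i) `|` _]setUC setUA ej => e.
  exact: e.
pose T := \bigcap_i sval (sval (ti i)).
have cT : closed T.
  apply: closed_bigI => i _; exact: (proj2_sig (sval (ti i))).
have WT : sval W `<=` T.
  move=> x Wx i _; apply: (proj2_sig (ti i)).
  by rewrite cov in Wx; exact: Wx.
pose t0 : ZG X W := exist _ (exist _ T cT) WT.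
have Ht0 : forall i, Zdelta X W (Wi i) t0 = ti i.
  move=> i; apply: ZG_eq => /=.
  rewrite /T setUC setU_bigcap_distr.
  have -> : \bigcap_j (sval (Wi i) `|` sval (sval (ti j))) =
            \bigcap_j (sval (sval (ti i)) `|` sval (Wi j)).
    by apply: eq_bigcapr => j _; rewrite setUC Hc'.
  rewrite -setU_bigcap_distr -cov; apply/setUidPl => x Wx.
  apply: (proj2_sig (ti i)); by rewrite cov in Wx; exact: Wx.
exists t0; split => // t' Ht'; case: unif => _ U.
apply: (U W W0 I Wi cov) => j; by rewrite Ht' Ht0.
Qed.
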